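(* Let $G=(V=V_0\uplus V_1,v_{\mathsf{init}},E,\gamma)$ be a quantitative graph game, let $\mu>0$ be the maximum of the absolute values of the costs along transitions, and let $d=\frac pq>1$ be the discount factor with $p,q$ positive integers. Then for all $(v,w)\in E$ and all $k>0$, \[\mathsf{cost}_k(v,w)=\frac{q^{k-1}n_1+q^{k-2}p\,n_2+\cdots+p^{k-1}n_k}{p^{k-1}}\] for some integers $n_1,\dots,n_k$ with $|n_i|\le\mu$ for all $i\in\{1,\dots,k\}$.
   Context: A quantitative graph game $G=(V=V_0\uplus V_1, v_{\mathsf{init}},E,\gamma)$ consists of a finite directed graph $(V,E)$ in which every state has at least one outgoing edge, a partition of $V$ into $V_0$ (maximizing player) and $V_1$ (minimizing player), an initial state, and an integer cost function $\gamma:E\to\mathbb{Z}$. Value iteration defines $\mathit{wt}_1(v)=\max\{\gamma(v,w):(v,w)\in E\}$ for $v\in V_0$ ($\min$ for $v\in V_1$) and $\mathit{wt}_{k+1}(v)=\max\{\gamma(v,w)+\frac1d\mathit{wt}_k(w):(v,w)\in E\}$ for $v\in V_0$ ($\min$ for $v\in V_1$). The transition costs are $\mathsf{cost}_1(v,w)=\gamma(v,w)$ and $\mathsf{cost}_k(v,w)=\gamma(v,w)+\frac1d\mathit{wt}_{k-1}(w)$ for $k>1$, so that $\mathit{wt}_k(v)$ is the max (for $v\in V_0$) or min (for $v\in V_1$) of $\mathsf{cost}_k(v,w)$ over $(v,w)\in E$. *)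

(* Defs.v *)
(* Values are rationals since d = p/q is rational. *)
From mathcomp Require Import all_boot all_order all_algebra.
Set Implicit Arguments. Unset Strict Implicit. Unset Printing Implicit Defensive.
Import Order.TTheory GRing.Theory Num.Theory.
Local Open Scope ring_scope.

Section Game.
Variables (V : finType) (V0 : {set V}) (E : rel V) (gamma : V -> V -> int)
          (d : rat).

Definition succs (v : V) : seq V := [seq w <- enum V | E v w].

Definition maxl (s : seq rat) : rat := foldr Num.max (head 0 s) s.
Definition minl (s : seq rat) : rat := foldr Num.min (head 0 s) s.

Definition opt (v : V) (s : seq rat) : rat :=
  if v \in V0 then maxl s else minl s.

(* value iteration: wt k v = wt_k(v) for k >= 1 ; wt 0 is an unused dummy *)
Fixpoint wt (k : nat) (v : V) : rat :=
  match k with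
  | 0 => 0
  | k'.+1 =>
      match k' with
      | 0 => opt v [seq (gamma v w)%:~R | w <- succs v]
      | _ => opt v [seq (gamma v w)%:~R + wt k' w / d | w <- succs v]
      end
  end.

Definition cost (k : nat) (v w : V) : rat :=
  if k == 1%N then (gamma v w)%:~R else (gamma v w)%:~R + wt k.-1 w / d.

Definition mu : nat := \max_(v : V) \max_(w : V | E v w) `|gamma v w|%N.

End Game.

(* Main.v *)
Require Import Defs.
From mathcomp Require Import all_boot all_order all_algebra.
From mathcomp Require Import ring lra.
Import Order.TTheory GRing.Theory Num.Theory.
Local Open Scope ring_scope.

Lemma foldr_max_in (x : rat) s : foldr Num.max x s \in x :: s.
Proof.
elim: s => [|y s IH] /=; first by rewrite mem_head.
rewrite maxEle; case: ifP => _; last by rewrite !inE eqxx orbT.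
by move: IH; rewrite !inE => /orP[->|->]; rewrite ?orbT.
Qed.

Lemma foldr_min_in (x : rat) s : foldr Num.min x s \in x :: s.
Proof.
elim: s => [|y s IH] /=; first by rewrite mem_head.
rewrite minEle; case: ifP => _; first by rewrite !inE eqxx orbT.
by move: IH; rewrite !inE => /orP[->|->]; rewrite ?orbT.
Qed.

Lemma opt_in (V : finType) (V0 : {set V}) v (s : seq rat) :
  s != [::] -> opt V0 v s \in s.
Proof.
case: s => // x s _; rewrite /opt /maxl /minl /=.
case: ifP => _.
- have := foldr_max_in x (x :: s); rewrite /= [in X in X -> _]inE => /orP[/eqP->|//].
  exact: mem_head.
- have := foldr_min_in x (x :: s); rewrite /= [in X in X -> _]inE => /orP[/eqP->|//].
  exact: mem_head.
Qed.

Lemma wt_in (V : finType) (V0 : {set V}) (E : rel V) (gamma : V -> V -> int)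
  (d : rat) (hE : forall v : V, exists w : V, E v w) k w : (0 < k)%N ->
  exists w', E w w' /\ wt V0 E gamma d k w = cost V0 E gamma d k w w'.
Proof.
have ne : succs E w != [::].
  case: (hE w) => w' H; apply/eqP => Hs.
  have : w' \in succs E w by rewrite mem_filter H mem_enum.
  by rewrite Hs.
have ne' (f : V -> rat) : [seq f w' | w' <- succs E w] != [::].
  by rewrite -size_eq0 size_map size_eq0.
case: k => // [[|k]] _.
- have /mapP[w' Hw' Heq] := @opt_in _ V0 w _ (ne' (fun w' => (gamma w w')%:~R)).
  exists w'; split; last by rewrite /= Heq.
  by move: Hw'; rewrite mem_filter => /andP[].
- have /mapP[w' Hw' Heq] := @opt_in _ V0 w _
     (ne' (fun w' => (gamma w w')%:~R + wt V0 E gamma d k.+1 w' / d)).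
  exists w'; split; first by move: Hw'; rewrite mem_filter => /andP[].
  by rewrite /= Heq /cost.
Qed.

Theorem lemma4 (V : finType) (V0 : {set V}) (v_init : V) (E : rel V)
    (gamma : V -> V -> int)
    (hE : forall v : V, exists w : V, E v w)
    (hmu : (0 < mu E gamma)%N)
    (p q : nat) (hp : (0 < p)%N) (hq : (0 < q)%N) (hd : (q < p)%N) :
  forall (v w : V), E v w -> forall k : nat, (0 < k)%N ->
    exists n : 'I_k -> int,
      (forall i : 'I_k, (`|n i| <= mu E gamma)%N) /\
      cost V0 E gamma (p%:R / q%:R) k v w =
        (\sum_(i < k) ((q ^ (k.-1 - i) * p ^ i)%N)%:R * (n i)%:~R)
          / (p ^ k.-1)%:R.
Proof.
have gmu v w : E v w -> (`|gamma v w| <= mu E gamma)%N.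
  move=> Hvw; rewrite /mu.
  apply: (leq_trans _ (leq_bigmax v)) => /=.
  exact: (leq_bigmax_cond (F := fun w => `|gamma v w|%N) w Hvw).
have p0 : (p%:R : rat) != 0 by rewrite pnatr_eq0 -lt0n.
have q0 : (q%:R : rat) != 0 by rewrite pnatr_eq0 -lt0n.
move=> v w Hvw k; case: k => // k _ /=.
elim: k v w Hvw => [|k IH] v w Hvw.
  exists (fun _ => gamma v w); split => [i|]; first exact: gmu.
  by rewrite big_ord1 /cost /= expn0 !mul1n divr1 mul1r.
have [w' [Hww' Heq]] := @wt_in _ V0 E gamma (p%:R / q%:R) hE k.+1 w (ltn0Sn k).
have [m [Hm Hc]] := IH w w' Hww'.
exists (fun i : 'I_k.+2 => if (i < k.+1)%N then m (inord i) else gamma v w).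
split => [i|].
  by case: ifP => _; [apply: Hm | apply: gmu].
have -> : cost V0 E gamma (p%:R/q%:R) k.+2 v w = (gamma v w)%:~R + wt V0 E gamma (p%:R/q%:R) k.+1 w / (p%:R/q%:R) by [].
rewrite Heq Hc [in RHS]big_ord_recr /= ltnn subnn expn0 mul1n.
have E1 : \sum_(i < k.+1) ((q ^ (k.+1 - i) * p ^ i)%N)%:R *
    ((if (i < k.+1)%N then m (inord i) else gamma v w)%:~R : rat)
    = q%:R * \sum_(i < k.+1) ((q ^ (k - i) * p ^ i)%N)%:R * (m i)%:~R.
  rewrite mulr_sumr; apply: eq_bigr => i _.
  rewrite ltn_ord; have -> : inord i = i by apply/val_inj; rewrite /= inordK.
  have -> : (k.+1 - i = (k - i).+1)%N by rewrite subSn // -ltnS.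
  by rewrite expnS !natrM !mulrA.
rewrite E1.
have P0 : ((p ^ k)%N%:R : rat) != 0 by rewrite pnatr_eq0 expn_eq0 negb_and -lt0n hp.
rewrite expnS natrM.
move: (\sum_(i < k.+1) _) P0 => S; move: ((p ^ k)%N%:R) => P P0.
move: (gamma v w)%:~R => g.
by field; rewrite P0 p0 q0.
Qed.
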